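(* Let $S=\{\alpha_i^l: i\in[\![d]\!],\ 1\le l\le k-1\}$. For any coloring $\Gamma$ and $k$-ordering $\Omega$ of $T_{d,k}$ with root $\mathcal T$, the map $g\mapsto g.\mathcal T$ is a graph isomorphism from the Cayley graph $\mathrm{Cay}(G_{d,k};S)$ (vertex set $G_{d,k}$, edges $\{g,sg\}$, $s\in S$) onto the line graph of $T_{d,k}$.
   Context: Fix $d,k\ge1$, $[\![d]\!]=\{0,\dots,d\}$. $G_{d,k}=\langle\alpha_0,\dots,\alpha_d\mid\alpha_i^k=e\rangle$ is the free product of $d+1$ cyclic groups of order $k$. The arboreal complex $T_{d,k}$: start from a single $d$-simplex $\mathcal T$, attach to each of its $(d-1)$-faces $k-1$ new $d$-simplices each using a new vertex, and inductively attach to each $(d-1)$-face created in the previous step $k-1$ new $d$-simplices each using a new vertex; $T_{d,k}$ is the union. The line graph of $T_{d,k}$ has the $d$-cells as vertices, two distinct $d$-cells adjacent iff they share a $(d-1)$-cell. A coloring $\Gamma$ is a map from vertices to $[\![d]\!]$ injective on each $d$-cell, extended to cells by $\Gamma(\sigma)=\{\Gamma(v):v\in\sigma\}$. A $k$-ordering $\Omega$ assigns to each $(d-1)$-cell $\sigma$ a homomorphism $\Omega_\sigma:\mathbb Z/k\mathbb Z\to\mathrm{Sym}(\delta(\sigma))$ with transitive image, $\delta(\sigma)$ the set of $d$-cells containing $\sigma$. Left action on $d$-cells: $\alpha_i^l.\tau=\Omega_\sigma(l).\tau$ where $\sigma$ is the $(d-1)$-face of $\tau$ of color $[\![d]\!]\setminus\{i\}$,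 extended to words letter by letter (right-most first); this is a well-defined action of $G_{d,k}$. *)

(* Defs.v *)
From mathcomp Require Import all_boot.
Unset Printing Implicit Defensive.

(* ---------- The arboreal complex T_{d,k} (concrete model) ----------
   A d-cell is encoded by its creation history [p : seq (nat*nat)]:
   [::] is the root simplex T; a step (j,c) means "replace the vertex in
   position j (i.e. attach along the (d-1)-face opposite to it) by a new
   vertex, copy number c (0 <= c < k-1)".  After the first step, the face
   used must be one created at the previous step, i.e. one containing the
   newest vertex, so the dropped position j differs from the previous one. *)

Definition step := (nat * nat)%type.
Definition Cell := seq step.

(* Vertices: [inl j] = j-th vertex of the root simplex, [inr p] = the new
   vertex introduced when creating the d-cell with history p. *)
Definition Vtx := (nat + seq step)%type.

Definition is_cell (d k : nat) (p : Cell) : bool :=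
  all (fun s : step => (s.1 <= d) && (s.2 < k.-1)) p &&
  sorted (fun a b : step => a.1 != b.1) p.

Fixpoint verts_aux (acc : seq step) (vs : seq Vtx) (p : seq step) : seq Vtx :=
  match p with
  | [::] => vs
  | s :: p' =>
      let acc' := rcons acc s in
      verts_aux acc' (set_nth (inl 0) vs s.1 (inr acc')) p'
  end.

Definition verts (d : nat) (p : Cell) : seq Vtx :=
  verts_aux [::] [seq inl i | i <- iota 0 d.+1] p.

Definition root_cell : Cell := [::].

Definition is_facet (d k : nat) (sigma : seq Vtx) : Prop :=
  uniq sigma /\ size sigma = d /\
  exists tau, is_cell d k tau /\ {subset sigma <= verts d tau}.

Definition in_delta (d k : nat) (sigma : seq Vtx) (tau : Cell) : Prop :=
  is_cell d k tau /\ {subset sigma <= verts d tau}.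

Definition line_adj (d k : nat) (tau tau' : Cell) : Prop :=
  tau <> tau' /\
  exists sigma, is_facet d k sigma /\
    {subset sigma <= verts d tau} /\ {subset sigma <= verts d tau'}.

Definition is_coloring (d k : nat) (Gam : Vtx -> 'I_d.+1) : Prop :=
  forall tau, is_cell d k tau -> uniq [seq Gam v | v <- verts d tau].

(* k-orderings: for each (d-1)-cell sigma, Om sigma : nat -> Cell -> Cell
   is a homomorphism Z/kZ -> Sym(delta(sigma)) (given on representatives
   l : nat, factoring through Z/kZ since Om sigma k = id) with transitive
   image; Om only depends on sigma as a vertex set. *)
Definition is_k_ordering (d k : nat) (Om : seq Vtx -> nat -> Cell -> Cell)
  : Prop :=
  forall sigma, is_facet d k sigma ->
    (forall sigma', perm_eq sigma sigma' -> Om sigma' = Om sigma) /\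
    (forall l tau, in_delta d k sigma tau -> in_delta d k sigma (Om sigma l tau)) /\
    (forall tau, in_delta d k sigma tau -> Om sigma 0 tau = tau) /\
    (forall a b tau, in_delta d k sigma tau ->
        Om sigma (a + b) tau = Om sigma a (Om sigma b tau)) /\
    (forall tau, in_delta d k sigma tau -> Om sigma k tau = tau) /\
    (forall tau tau', in_delta d k sigma tau -> in_delta d k sigma tau' ->
        exists l, Om sigma l tau = tau').

Definition face_of_color (d : nat) (Gam : Vtx -> 'I_d.+1) (tau : Cell) (i : nat)
  : seq Vtx := [seq v <- verts d tau | nat_of_ord (Gam v) != i].

(* ---------- The group G_{d,k} (normal forms of the free product) ----------
   An element is a reduced word [:: (i1,l1); ...; (im,lm)] standing for
   alpha_{i1}^{l1} ... alpha_{im}^{lm}, with i <= d, 0 < l < k, and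
   consecutive indices distinct. *)
Definition Word := seq (nat * nat).

Definition is_reduced (d k : nat) (w : Word) : bool :=
  all (fun a : nat * nat => (a.1 <= d) && (0 < a.2 < k)) w &&
  sorted (fun a b : nat * nat => a.1 != b.1) w.

Definition lmul (k : nat) (a : nat * nat) (w : Word) : Word :=
  match w with
  | [::] => [:: a]
  | b :: w' =>
      if a.1 == b.1 then
        (if (a.2 + b.2) %% k == 0 then w' else (a.1, (a.2 + b.2) %% k) :: w')
      else a :: w
  end.

Definition cay_adj (d k : nat) (g h : Word) : Prop :=
  exists i l, i <= d /\ 0 < l < k /\ (h = lmul k (i, l) g \/ g = lmul k (i, l) h).

Definition act1 (d : nat) (Gam : Vtx -> 'I_d.+1)
  (Om : seq Vtx -> nat -> Cell -> Cell) (a : nat * nat) (tau : Cell) : Cell :=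
  Om (face_of_color d Gam tau a.1) a.2 tau.

Definition act (d : nat) (Gam : Vtx -> 'I_d.+1)
  (Om : seq Vtx -> nat -> Cell -> Cell) (g : Word) (tau : Cell) : Cell :=
  foldr (act1 d Gam Om) tau g.

(* Main.v *)
Require Import Defs.
From mathcomp Require Import all_boot zify.
Set Implicit Arguments. Unset Strict Implicit.


Definition vx (d : nat) (p : Cell) (x : nat) : Vtx := nth (inl 0) (verts d p) x.

Lemma verts_aux_rcons acc vs p s :
  verts_aux acc vs (rcons p s) =
  set_nth (inl 0) (verts_aux acc vs p) s.1 (inr (acc ++ rcons p s)).
Proof.
elim: p acc vs => [|x p IH] acc vs /=; first by rewrite cats1.
by rewrite IH cat_rcons.
Qed.

Lemma verts_rcons d p s :
  verts d (rcons p s) = set_nth (inl 0) (verts d p) s.1 (inr (rcons p s)).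
Proof. by rewrite /verts verts_aux_rcons. Qed.

Lemma vx_rcons d p s x :
  vx d (rcons p s) x = if x == s.1 then inr (rcons p s) else vx d p x.
Proof. by rewrite /vx verts_rcons nth_set_nth. Qed.

Lemma vx_nil d x : vx d [::] x = inl (if x < d.+1 then x else 0).
Proof.
rewrite /vx (_ : verts d [::] = [seq inl i | i <- iota 0 d.+1]) //; case: ltnP => h.
  by rewrite (nth_map 0) ?size_iota // nth_iota.
by rewrite nth_default // size_map size_iota.
Qed.

Lemma size_verts d p : all (fun s : step => s.1 <= d) p -> size (verts d p) = d.+1.
Proof.
elim/last_ind: p => [|p s IH]; first by rewrite /verts /= size_map size_iota.
rewrite all_rcons => /andP[hs hp].
by rewrite verts_rcons size_set_nth IH //; apply/maxn_idPr.
Qed.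

Lemma vx_inr d p x q : vx d p x = inr q ->
  (0 < size q <= size p) /\ take (size q) p = q.
Proof.
elim/last_ind: p x q => [|p s IH] x q; first by rewrite vx_nil.
rewrite vx_rcons; case: eqP => _.
  by case=> <-; rewrite take_size size_rcons leqnn.
move=> /IH [/andP [h1 h2] h3]; split.
  by rewrite h1 size_rcons; apply: leqW.
by rewrite -cats1 takel_cat.
Qed.

Lemma vx_inj d p x y : x < d.+1 -> y < d.+1 -> vx d p x = vx d p y -> x = y.
Proof.
elim/last_ind: p x y => [|p s IH] x y hx hy.
  by rewrite !vx_nil hx hy; case.
rewrite !vx_rcons; case: eqP => ex; case: eqP => ey.
- by rewrite ex ey.
- move=> /esym /vx_inr [/andP [_ h] _]; move: h; rewrite size_rcons; lia.
- move=> /vx_inr [/andP [_ h] _]; move: h; rewrite size_rcons; lia.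
- exact: IH.
Qed.

Lemma verts_mk d p : all (fun s : step => s.1 <= d) p ->
  verts d p = map (vx d p) (iota 0 d.+1).
Proof. by move=> h; rewrite -(@size_verts d p h) -/(mkseq _ _) mkseq_nth. Qed.

Lemma uniq_verts d p : all (fun s : step => s.1 <= d) p -> uniq (verts d p).
Proof.
move=> h; rewrite verts_mk // map_inj_in_uniq ?iota_uniq //.
by move=> x y; rewrite !mem_iota /= => hx hy; apply: vx_inj.
Qed.

Lemma mem_verts d p v : all (fun s : step => s.1 <= d) p ->
  (v \in verts d p) <-> exists2 x, x < d.+1 & vx d p x = v.
Proof.
move=> h; rewrite verts_mk //; split.
  by case/mapP => x; rewrite mem_iota => hx ->; exists x.
by case=> x hx <-; apply: map_f; rewrite mem_iota.
Qed.

Lemma vx_stable d p q x w : vx d (p ++ q) x = w ->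
  (forall r, w = inr r -> size r <= size p) -> vx d p x = w.
Proof.
elim/last_ind: q w => [|q s IH] w; first by rewrite cats0.
rewrite -rcons_cat vx_rcons; case: eqP => _.
  move=> <- /(_ _ erefl); rewrite size_rcons size_cat; lia.
exact: IH.
Qed.

Lemma kill d p s q x : x < d.+1 -> s.1 < d.+1 ->
  vx d (rcons p s ++ q) x <> vx d p s.1.
Proof.
move=> hx hs e.
have old : forall r, vx d p s.1 = inr r -> size r <= size (rcons p s).
  move=> r /vx_inr [/andP [_ h] _]; rewrite size_rcons; exact: leqW.
move: (@vx_stable d (rcons p s) q x _ e old); rewrite vx_rcons; case: eqP => ex.
  move=> /esym /vx_inr [/andP [_ h] _]; move: h; rewrite size_rcons; lia.
by move=> /(@vx_inj d p _ _ hx hs).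
Qed.

Lemma cell_rcons d k p s : is_cell d k (rcons p s) =
  [&& is_cell d k p, s.1 <= d, s.2 < k.-1 & (p == [::]) || ((last s p).1 != s.1)].
Proof.
rewrite /is_cell all_rcons.
case: p => [|x p] /=; first by rewrite andbT !andbA.
rewrite rcons_path.
by case: (s.1 <= d) (s.2 < k.-1) (x.1 <= d) (x.2 < k.-1) (all _ p) (path _ _ p)
  ((last x p).1 != s.1) => [] [] [] [] [] [] [].
Qed.

Lemma cell_pos d k p : is_cell d k p -> all (fun s : step => s.1 <= d) p.
Proof. by case/andP => h _; apply: sub_all h => s /andP []. Qed.


Lemma color_inj d k Gam tau x y : is_coloring d k Gam -> is_cell d k tau ->
  x < d.+1 -> y < d.+1 -> Gam (vx d tau x) = Gam (vx d tau y) -> x = y.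
Proof.
move=> hG ht hx hy e.
have := hG _ ht; rewrite (verts_mk (cell_pos ht)) -map_comp => hu.
have := nth_uniq ord0 _ _ hu; rewrite size_map size_iota => /(_ x y hx hy).
rewrite !(nth_map 0) ?size_iota // !nth_iota //= e eqxx.
by move/esym/eqP.
Qed.

Lemma color_ex d k Gam tau i : is_coloring d k Gam -> is_cell d k tau ->
  i < d.+1 -> exists2 j, j < d.+1 & Gam (vx d tau j) = i :> nat.
Proof.
move=> hG ht hi.
have := hG _ ht; rewrite (verts_mk (cell_pos ht)) -map_comp => hu.
set s := map _ _ in hu.
case: (boolP (Ordinal hi \in s)).
  case/mapP => j; rewrite mem_iota => /= hj /(congr1 val) /= e; exists j => //.
move=> hn.
have : {subset s <= rem (Ordinal hi) (enum 'I_d.+1)}.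
  move=> c hc; rewrite (mem_rem_uniq _ (enum_uniq _)) inE mem_enum andbT.
  by apply/eqP => ec; move: hn; rewrite -ec hc.
move=> /(uniq_leq_size hu); rewrite size_rem ?mem_enum // size_enum_ord.
by rewrite /s size_map size_iota ltnn.
Qed.

Lemma face_eq d k Gam tau i j : is_coloring d k Gam -> is_cell d k tau ->
  j < d.+1 -> Gam (vx d tau j) = i :> nat ->
  face_of_color d Gam tau i = map (vx d tau) (filter (predC1 j) (iota 0 d.+1)).
Proof.
move=> hG ht hj hc.
rewrite /face_of_color (verts_mk (cell_pos ht)) filter_map; congr map.
apply: eq_in_filter => x; rewrite mem_iota /= => hx.
case: (eqVneq x j) => [->|ne]; first by rewrite hc eqxx.
apply/eqP => e; move: ne; rewrite (@color_inj d k Gam tau x j hG ht hx hj) ?eqxx //.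
by apply: val_inj; rewrite /= e hc.
Qed.

Lemma face_size d k Gam tau i : is_coloring d k Gam -> is_cell d k tau ->
  i < d.+1 -> size (face_of_color d Gam tau i) = d.
Proof.
move=> hG ht hi; case: (color_ex hG ht hi) => j hj hc.
rewrite (face_eq hG ht hj hc) size_map -rem_filter ?iota_uniq //.
by rewrite size_rem ?mem_iota // size_iota.
Qed.

Lemma face_uniq d k Gam tau i : is_cell d k tau -> uniq (face_of_color d Gam tau i).
Proof. move=> ht; apply: filter_uniq; exact: (uniq_verts (cell_pos ht)). Qed.

Lemma face_sub d Gam tau i : {subset face_of_color d Gam tau i <= verts d tau}.
Proof. by move=> v; rewrite mem_filter => /andP []. Qed.

Lemma face_facet d k Gam tau i : is_coloring d k Gam -> is_cell d k tau ->
  i < d.+1 -> is_facet d k (face_of_color d Gam tau i).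
Proof.
move=> hG ht hi; split; first exact: (face_uniq Gam i ht).
split; first exact: (face_size hG ht hi).
by exists tau; split => //; apply: face_sub.
Qed.

Lemma face_perm d k Gam tau tau2 i : is_coloring d k Gam -> is_cell d k tau ->
  is_cell d k tau2 -> i < d.+1 ->
  {subset face_of_color d Gam tau i <= verts d tau2} ->
  perm_eq (face_of_color d Gam tau2 i) (face_of_color d Gam tau i).
Proof.
move=> hG ht ht2 hi hs.
have sub : {subset face_of_color d Gam tau i <= face_of_color d Gam tau2 i}.
  move=> v hv; rewrite mem_filter (hs _ hv) andbT.
  by move: hv; rewrite mem_filter => /andP [].
have sz : size (face_of_color d Gam tau2 i) <= size (face_of_color d Gam tau i).
  by rewrite (face_size hG ht hi) (face_size hG ht2 hi).
have [_ e] := uniq_min_size (face_uniq Gam i ht) sub sz.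
rewrite perm_sym; apply: uniq_perm; [exact: (face_uniq Gam i ht)|exact: (face_uniq Gam i ht2)|exact: e].
Qed.

Lemma facet_face d k Gam tau sigma : is_coloring d k Gam -> is_cell d k tau ->
  uniq sigma -> size sigma = d -> {subset sigma <= verts d tau} ->
  exists2 i, i < d.+1 & perm_eq sigma (face_of_color d Gam tau i).
Proof.
move=> hG ht hu hsz hs.
have hp := cell_pos ht.
case: (boolP (has (fun x => vx d tau x \notin sigma) (iota 0 d.+1))); last first.
  move=> hn; have : {subset verts d tau <= sigma}.
    move=> v /(mem_verts _ hp) [x hx <-].
    by move: hn => /hasPn /(_ x); rewrite mem_iota /= hx negbK => ->.
  move=> /(uniq_leq_size (uniq_verts hp)); rewrite size_verts // hsz ltnn //.
case/hasP => j; rewrite mem_iota /= => hj hn.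
exists (Gam (vx d tau j)) => //.
have sub : {subset sigma <= face_of_color d Gam tau (Gam (vx d tau j))}.
  move=> v hv; rewrite mem_filter (hs _ hv) andbT.
  move: (hs _ hv) => /(mem_verts _ hp) [x hx ex].
  apply/eqP => /val_inj; rewrite -ex => /(color_inj hG ht hx hj) exj.
  by move: hn; rewrite -exj ex hv.
have sz : size (face_of_color d Gam tau (Gam (vx d tau j))) <= size sigma.
  by rewrite (face_size hG ht (ltn_ord _)) hsz.
have [_ e] := uniq_min_size hu sub sz.
apply: uniq_perm; [exact: hu|exact: (face_uniq Gam _ ht)|exact: e].
Qed.


Lemma om_mod d k Om sigma tau l : is_k_ordering d k Om -> is_facet d k sigma ->
  in_delta d k sigma tau -> Om sigma l tau = Om sigma (l %% k) tau.
Proof.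
move=> hO hf ht; have [_ [hdel [h0 [hadd [hk _]]]]] := hO sigma hf.
have mk : forall q t, in_delta d k sigma t -> Om sigma (q * k) t = t.
  elim=> [|q IH] t hti; first by rewrite mul0n h0.
  by rewrite mulSn hadd ?IH // hk.
by rewrite {1}(divn_eq l k) hadd ?mk //; apply: hdel.
Qed.

Lemma child d k tau rho j : is_cell d k tau -> is_cell d k rho -> j < d.+1 ->
  (forall t tau0, tau = rcons tau0 t -> t.1 != j) ->
  (forall x, x < d.+1 -> x != j -> vx d tau x \in verts d rho) -> rho <> tau ->
  exists c, rho = rcons tau (j, c).
Proof.
move=> ht hr hj hlast hin hne.
have hpr := cell_pos hr.
have [r er] : exists r, rho = tau ++ r.
  case/lastP: tau ht hlast hin hne => [|tau0 t] ht hlast hin hne; first by exists rho.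
  move: (ht); rewrite cell_rcons => /and4P [_ ht1 _ _].
  have := hin t.1 ht1 (hlast _ _ erefl); rewrite vx_rcons eqxx.
  case/(mem_verts _ hpr) => y hy /vx_inr [_ e].
  by exists (drop (size (rcons tau0 t)) rho); rewrite -{1}e cat_take_drop.
case: r er => [|u r'] er; first by move: hne; rewrite er cats0.
have posu : u.1 < d.+1.
  by move/allP: hpr => /(_ u); rewrite er mem_cat inE eqxx orbT => /(_ isT).
have uj : u.1 = j.
  apply/eqP; apply: contraT => ne.
  case/(mem_verts _ hpr): (hin _ posu ne) => y hy.
  by rewrite er -cat_rcons => /(kill hy posu).
case: r' er => [|u2 r''] er.
  by exists u.2; rewrite er cats1 -uj; case: u {posu uj er}.
exfalso.
have posu2 : u2.1 < d.+1.
  by move/allP: hpr => /(_ u2); rewrite er mem_cat !inE eqxx !orbT => /(_ isT).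
have ne2 : u.1 != u2.1.
  move: hr => /andP [_]; rewrite er => /cat_sorted2 [_] /=.
  by case/andP.
have ne2j : u2.1 != j by rewrite -uj eq_sym.
case/(mem_verts _ hpr): (hin _ posu2 ne2j) => y hy.
rewrite (_ : vx d tau u2.1 = vx d (rcons tau u) u2.1); last first.
  by rewrite vx_rcons eq_sym (negbTE ne2).
by rewrite er -cat_rcons -cat_rcons => /(kill hy posu2).
Qed.

Lemma base_cell d k tau0 j : is_cell d k tau0 -> j < d.+1 ->
  exists b, [/\ is_cell d k b, (forall x, x != j -> vx d b x = vx d tau0 x) &
     forall c, c < k.-1 -> is_cell d k (rcons b (j, c))].
Proof.
move=> ht hj.
case/lastP: tau0 ht => [|tau1 t] ht.
  by exists [::]; split => // c hc; rewrite cell_rcons /= -ltnS hj hc.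
move: (ht); rewrite cell_rcons => /and4P [ht1 htd htk hl].
case: (eqVneq t.1 j) => etj.
  exists tau1; split => //.
    by move=> x hx; rewrite vx_rcons etj (negbTE hx).
  move=> c hc; rewrite cell_rcons ht1 -ltnS hj hc /=.
  by case: tau1 {ht ht1} hl => //= a tau2; rewrite etj.
exists (rcons tau1 t); split => // c hc.
by rewrite cell_rcons ht -ltnS hj hc last_rcons etj orbT.
Qed.

Lemma free d k Gam Om tau0 i tau l1 l2 : 0 < k ->
  is_coloring d k Gam -> is_k_ordering d k Om -> is_cell d k tau0 -> i < d.+1 ->
  in_delta d k (face_of_color d Gam tau0 i) tau -> l1 < k -> l2 < k ->
  Om (face_of_color d Gam tau0 i) l1 tau = Om (face_of_color d Gam tau0 i) l2 tau ->
  l1 = l2.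
Proof.
move=> hk hG hO ht0 hi ht hl1 hl2 e.
set sigma := face_of_color d Gam tau0 i in ht e.
have hf : is_facet d k sigma by apply: face_facet.
have [_ [hdel [h0 [hadd [hkk htr]]]]] := hO sigma hf.
case: (color_ex hG ht0 hi) => j hj hc.
case: (base_cell ht0 hj) => b [hb hbx hbc].
set cs := b :: map (fun c => rcons b (j, c)) (iota 0 k.-1).
have szcs : size cs = k by rewrite /= size_map size_iota prednK.
have ucs : uniq cs.
  rewrite /= map_inj_uniq ?iota_uniq ?andbT.
    apply/mapP => [[c _ /(congr1 size)]]; rewrite size_rcons => /eqP.
    by rewrite ltn_eqF.
  by move=> c c' /rcons_inj [->].
have incs : forall c, c \in cs -> in_delta d k sigma c.
  have hbp := cell_pos hb.
  move=> c hcs; have hc2 : is_cell d k c.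
    by move: hcs; rewrite inE => /orP [/eqP -> //|/mapP [c' /[!mem_iota] /= hc' ->]]; apply: hbc.
  split => // v; rewrite /sigma (face_eq hG ht0 hj hc) => /mapP [x].
  rewrite mem_filter mem_iota /= => /andP [hxj hx] ->.
  apply/(mem_verts _ (cell_pos hc2)); exists x => //.
  move: hcs; rewrite inE => /orP [/eqP -> //|/mapP [c' _ ->]]; first exact: hbx.
  by rewrite vx_rcons (negbTE hxj) hbx.
have sub : {subset cs <= map (fun l => Om sigma l tau) (iota 0 k)}.
  move=> c /incs hcc; case: (htr _ _ ht hcc) => l el.
  apply/mapP; exists (l %% k); first by rewrite mem_iota ltn_pmod.
  by rewrite -(om_mod _ hO hf ht).
have := leq_size_uniq ucs sub; rewrite size_map size_iota szcs leqnn => /(_ isT) hu.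
have := nth_uniq tau _ _ hu; rewrite size_map size_iota => /(_ l1 l2 hl1 hl2).
rewrite !(nth_map 0) ?size_iota // !nth_iota // !add0n e eqxx.
by move/esym/eqP.
Qed.


Lemma red_cons d k a w : is_reduced d k (a :: w) =
  [&& a.1 <= d, 0 < a.2 < k, is_reduced d k w &
     (if w is b :: _ then a.1 != b.1 else true)].
Proof.
rewrite /is_reduced /=; case: w => [|b w] /=; first by rewrite !andbT.
by case: (a.1 <= d) (0 < a.2) (a.2 < k) (b.1 <= d) (0 < b.2) (b.2 < k) (all _ w) (a.1 != b.1) (path _ b w) => [] [] [] [] [] [] [] [] [].


Qed.

Lemma act1_cell d k Gam Om a tau : is_coloring d k Gam -> is_k_ordering d k Om ->
  is_cell d k tau -> a.1 < d.+1 -> is_cell d k (act1 d Gam Om a tau).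
Proof.
move=> hG hO ht ha; rewrite /act1.
have hf := face_facet hG ht ha.
have [_ [hdel _]] := hO _ hf.
have hd : in_delta d k (face_of_color d Gam tau a.1) tau by split => //; apply: face_sub.
by case: (hdel a.2 _ hd).
Qed.

Lemma act_cell d k Gam Om g tau : is_coloring d k Gam -> is_k_ordering d k Om ->
  is_cell d k tau -> all (fun a : nat * nat => a.1 <= d) g ->
  is_cell d k (act d Gam Om g tau).
Proof.
move=> hG hO ht; elim: g => [|a g IH] //= /andP [ha hg].
by apply: act1_cell => //; apply: IH.
Qed.

Lemma red_pos d k g : is_reduced d k g -> all (fun a : nat * nat => a.1 <= d) g.
Proof. by case/andP => h _; apply: sub_all h => a /andP []. Qed.

Lemma act_lmul d k Gam Om g i l tau : 0 < k ->
  is_coloring d k Gam -> is_k_ordering d k Om -> is_cell d k tau ->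
  all (fun a : nat * nat => a.1 <= d) g -> i < d.+1 ->
  act d Gam Om (lmul k (i, l) g) tau = act1 d Gam Om (i, l) (act d Gam Om g tau).
Proof.
move=> hk hG hO ht hg hi.
case: g hg => [|b g] //= /andP [hb hg].
case: eqP => [eb|] //=.
set t' := act d Gam Om g tau.
have ht' : is_cell d k t' by apply: act_cell.
set sigma := face_of_color d Gam t' i.
have hf : is_facet d k sigma by apply: face_facet.
have [hp [hdel [h0 [hadd [hkk htr]]]]] := hO _ hf.
have hd : in_delta d k sigma t' by split => //; apply: face_sub.
rewrite /act1 /= -eb -/sigma.
set t2 := Om sigma b.2 t'.
have hd2 : in_delta d k sigma t2 by apply: hdel.
have ht2 : is_cell d k t2 by case: hd2.
rewrite (hp (face_of_color d Gam t2 i)); last first.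
  by rewrite perm_sym; apply: (face_perm hG ht' ht2 hi (proj2 hd2)).
rewrite /t2 -hadd // (om_mod _ hO hf hd).
case: eqP => [->|_] /=; first by rewrite h0.
by rewrite /act1 /= -/t'.
Qed.

Lemma red_nil d k : is_reduced d k [::].
Proof. by []. Qed.

Lemma lmul_red d k g i l : is_reduced d k g -> i <= d -> 0 < l < k ->
  is_reduced d k (lmul k (i, l) g).
Proof.
move=> hg hi hl; case: g hg => [|b g] /=; first by rewrite red_cons /= hi hl.
rewrite red_cons => /and4P [hb1 hb2 hg hs].
case: eqP => [eb|nb].
  case: eqP => [//|nz]; rewrite red_cons /= hi hg.
  have hk : 0 < k by case/andP: hl => h1 h2; apply: leq_ltn_trans h2.
  have nz' : (l + b.2) %% k != 0 by apply/eqP.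
  rewrite ltn_pmod // lt0n nz' /=.
  by case: g {hg} hs => // c g; rewrite eb.
by rewrite red_cons /= hi hl red_cons hb1 hb2 hg hs; apply/eqP.
Qed.

Lemma lmul_neq d k g i l : is_reduced d k g -> 0 < l < k -> lmul k (i, l) g <> g.
Proof.
move=> hg hl; case: g hg => [|b g] //=.
rewrite red_cons => /and4P [hb1 hb2 hg hs].
case: eqP => [eb|nb].
  case: eqP => [_ /(congr1 size) /= /eqP|nz [e2]]; first by lia.
  move: e2 hl hb2 nz; case: b {eb hs hb1} => b1 b2 /= e2 hl hb2 nz.
  case: e2 => _ e2; case/andP: hl => hl1 hl2; case/andP: hb2 => _ hb2.
  have := divn_eq (l + b2) k; rewrite e2; case: ((l + b2) %/ k) => [|q] e; first lia.
  rewrite mulSn in e; lia.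
by move/(congr1 size) => /= /eqP; lia.
Qed.


Lemma depth d k Gam Om g : 0 < k -> is_coloring d k Gam -> is_k_ordering d k Om ->
  is_reduced d k g ->
  size (act d Gam Om g [::]) = size g /\
  (if g is (i, l) :: g' then
     (exists s, act d Gam Om g [::] = rcons (act d Gam Om g' [::]) s) /\
     Gam (inr (act d Gam Om g [::])) = i :> nat
   else True).
Proof.
move=> hk hG hO; elim: g => [|[i l] g' IH] hg; first by [].
move: (hg); rewrite red_cons /= => /and4P [hi hl hg' hs].
have [IH1 IH2] := IH hg'.
set t' := act d Gam Om g' [::].
have ht' : is_cell d k t' by apply: act_cell => //; apply: red_pos hg'.
have hi' : i < d.+1 by rewrite ltnS.
case: (color_ex hG ht' hi') => j hj hc.
set sigma := face_of_color d Gam t' i.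
have hf : is_facet d k sigma by apply: face_facet.
have [hp [hdel [h0 [hadd [hkk htr]]]]] := hO _ hf.
have hd : in_delta d k sigma t' by split => //; apply: face_sub.
rewrite /act1 /= -/sigma.
set t := Om sigma l t'.
have hdt : in_delta d k sigma t by apply: hdel.
have htc : is_cell d k t by case: hdt.
have neq : t <> t'.
  move=> ett.
  have e0 : Om sigma l t' = Om sigma 0 t' by rewrite h0 // -/t ett.
  have := free hk hG hO ht' hi' hd _ _ e0; case/andP: hl => hl1 hl2.
  by move=> /(_ hl2 hk) l0; move: hl1; rewrite l0.
have [c ec] : exists c, t = rcons t' (j, c).
  apply: (child ht' htc hj) => //.
    move=> t0 tau0 et; move: IH2 hs; case E: g' => [|[i' l'] g''].
      by move: et; rewrite /t' E /=; case: tau0.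
    move=> [_ IH2] hs; apply/eqP => e0.
    move: hc; rewrite -e0 /vx et verts_rcons nth_set_nth /= eqxx -et => hc.
    by move: hs; rewrite -hc /t' E IH2 eqxx.
  move=> x hx hxj; apply: (proj2 hdt); rewrite /sigma (face_eq hG ht' hj hc).
  by apply: map_f; rewrite mem_filter mem_iota /= hxj hx.
split; first by rewrite ec size_rcons IH1.
split; first by exists (j, c).
case: (color_ex hG htc hi') => j2 hj2 hc2.
have ej : j2 = j.
  apply/eqP; apply: contraT => ne.
  move: hc2; rewrite ec vx_rcons (negbTE ne) -hc => /val_inj.
  by move=> /(color_inj hG ht' hj2 hj) e; move: ne; rewrite e eqxx.
by move: hc2; rewrite ej ec vx_rcons eqxx.
Qed.

Lemma phi_inj d k Gam Om g h : 0 < k -> is_coloring d k Gam -> is_k_ordering d k Om ->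
  is_reduced d k g -> is_reduced d k h ->
  act d Gam Om g [::] = act d Gam Om h [::] -> g = h.
Proof.
move=> hk hG hO; elim: g h => [|[i l] g IH] h hg hh e.
  have [s _] := depth hk hG hO hh; move: s; rewrite -e /= => /esym /size0nil //.
case: h hh e => [|[i2 l2] h] hh e.
  by have [s _] := depth hk hG hO hg; move: s; rewrite e.
have [_ [[s es] cg]] := depth hk hG hO hg.
have [_ [[s2 es2] ch]] := depth hk hG hO hh.
move: (hg) (hh); rewrite !red_cons /= => /and4P [hi hl hg' _] /and4P [hi2 hl2 hh' _].
have eg : act d Gam Om g [::] = act d Gam Om h [::].
  by move: e; rewrite es es2 => /rcons_inj [].
have egh := IH _ hg' hh' eg; subst h.
have ei : i = i2 by rewrite -cg e ch.
subst i2; congr (_ :: _); congr (_, _).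
have ht' : is_cell d k (act d Gam Om g [::]) by apply: act_cell => //; apply: red_pos hg'.
have hi' : i < d.+1 by rewrite ltnS.
have hd : in_delta d k (face_of_color d Gam (act d Gam Om g [::]) i) (act d Gam Om g [::]).
  by split => //; apply: face_sub.
apply: (free hk hG hO ht' hi' hd) => //.
- by case/andP: hl.
- by case/andP: hl2.
Qed.

Lemma phi_surj d k Gam Om tau : 0 < k -> is_coloring d k Gam -> is_k_ordering d k Om ->
  is_cell d k tau -> exists2 g, is_reduced d k g & act d Gam Om g [::] = tau.
Proof.
move=> hk hG hO; elim/last_ind: tau => [|tau s IH] ht; first by exists [::].
move: (ht); rewrite cell_rcons => /and4P [ht1 hs1 hs2 hl].
have [g' hg' e'] := IH ht1.
set j := s.1.
have hj : j < d.+1 by rewrite ltnS.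
set i := nat_of_ord (Gam (vx d tau j)).
have hi : i < d.+1 by apply: ltn_ord.
set sigma := face_of_color d Gam tau i.
have hf : is_facet d k sigma by apply: face_facet.
have [hp [hdel [h0 [hadd [hkk htr]]]]] := hO _ hf.
have hd : in_delta d k sigma tau by split => //; apply: face_sub.
have hd2 : in_delta d k sigma (rcons tau s).
  split => // v; rewrite /sigma (face_eq hG ht1 hj erefl) => /mapP [x].
  rewrite mem_filter mem_iota /= => /andP [hxj hx] ->.
  apply/(mem_verts _ (cell_pos ht)); exists x => //.
  by rewrite vx_rcons (negbTE hxj).
have [l el] := htr _ _ hd hd2.
have nz : l %% k != 0.
  apply/eqP => l0; move: el; rewrite (om_mod _ hO hf hd) l0 h0 // => /(congr1 size).
  by rewrite size_rcons => /eqP; lia.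
exists ((i, l %% k) :: g').
  rewrite red_cons /= -ltnS hi lt0n nz ltn_pmod //= hg'.
  case: g' hg' e' => // [[i' l']] g'' hg' e'.
  have [_ [[s0 es0] c0]] := depth hk hG hO hg'.
  rewrite e' in es0 c0; apply/eqP => /= ei.
  move: hl; rewrite es0 last_rcons => /orP [/eqP /(congr1 size)|ne].
    by rewrite size_rcons.
  have hs0 : s0.1 < d.+1.
    by move: ht1; rewrite es0 cell_rcons => /and4P [_ h _ _]; rewrite ltnS.
  have ec : Gam (vx d tau s0.1) = Gam (vx d tau j).
    apply: val_inj; rewrite /= -/i ei -c0.
    by rewrite {1}es0 vx_rcons eqxx -es0.
  by move: ne; rewrite (color_inj hG ht1 hs0 hj ec) eqxx.
rewrite /= e' /act1 /= -/sigma -(om_mod _ hO hf hd) el //.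
Qed.

Lemma adj1 d k Gam Om g h i l : 0 < k -> is_coloring d k Gam -> is_k_ordering d k Om ->
  is_reduced d k g -> is_reduced d k h -> i <= d -> 0 < l < k ->
  h = lmul k (i, l) g ->
  line_adj d k (act d Gam Om g [::]) (act d Gam Om h [::]).
Proof.
move=> hk hG hO hg hh hi hl eh.
have hi' : i < d.+1 by rewrite ltnS.
have ht : is_cell d k (act d Gam Om g [::]) by apply: act_cell => //; apply: red_pos hg.
have e : act d Gam Om h [::] = act1 d Gam Om (i, l) (act d Gam Om g [::]).
  by rewrite eh act_lmul //; apply: red_pos hg.
set sigma := face_of_color d Gam (act d Gam Om g [::]) i.
have hf : is_facet d k sigma by apply: face_facet.
have [hp [hdel _]] := hO _ hf.
have hd : in_delta d k sigma (act d Gam Om g [::]) by split => //; apply: face_sub.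
split.
  move=> egh; have := phi_inj hk hG hO hg hh egh => egh'.
  by apply: (lmul_neq (i := i) hg hl); rewrite -eh egh'.
exists sigma; split => //; split; first exact: face_sub.
by rewrite e; case: (hdel l _ hd).
Qed.

Lemma adj2 d k Gam Om g h : 0 < k -> is_coloring d k Gam -> is_k_ordering d k Om ->
  is_reduced d k g -> is_reduced d k h ->
  line_adj d k (act d Gam Om g [::]) (act d Gam Om h [::]) -> cay_adj d k g h.
Proof.
move=> hk hG hO hg hh [ne [sigma [hf [s1 s2]]]].
have ht : is_cell d k (act d Gam Om g [::]) by apply: act_cell => //; apply: red_pos hg.
have ht2 : is_cell d k (act d Gam Om h [::]) by apply: act_cell => //; apply: red_pos hh.
have [hu [hsz _]] := hf.
have [i hi hpe] := facet_face hG ht hu hsz s1.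
have [hp [hdel [h0 [hadd [hkk htr]]]]] := hO _ hf.
have hd : in_delta d k sigma (act d Gam Om g [::]) by [].
have hd2 : in_delta d k sigma (act d Gam Om h [::]) by [].
have [l el] := htr _ _ hd hd2.
have nz : l %% k != 0.
  by apply/eqP => l0; apply: ne; rewrite -el (om_mod _ hO hf hd) l0 h0.
have hl : 0 < l %% k < k by rewrite lt0n nz ltn_pmod.
exists i, (l %% k); split; [by rewrite -ltnS | split; [exact: hl | ]].
left. apply: (phi_inj hk hG hO hh (lmul_red hg _ hl)); first by rewrite -ltnS.
rewrite act_lmul //; last by apply: red_pos hg.
by rewrite /act1 /= (hp _ hpe) -(om_mod _ hO hf hd) el.
Qed.

Theorem corollary5_aux (d k : nat) (hd : 1 <= d) (hk : 1 <= k)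
  (Gam : Vtx -> 'I_d.+1) (Om : seq Vtx -> nat -> Cell -> Cell) :
  is_coloring d k Gam -> is_k_ordering d k Om ->
  let phi := fun g => act d Gam Om g root_cell in
  [/\ (forall g, is_reduced d k g -> is_cell d k (phi g)),
      (forall g h, is_reduced d k g -> is_reduced d k h -> phi g = phi h -> g = h),
      (forall tau, is_cell d k tau -> exists2 g, is_reduced d k g & phi g = tau)
    & (forall g h, is_reduced d k g -> is_reduced d k h ->
         cay_adj d k g h <-> line_adj d k (phi g) (phi h))].
Proof.
move=> hG hO phi; rewrite /phi /root_cell; split.
- by move=> g hg; apply: act_cell => //; apply: red_pos hg.
- by move=> g h hg hh e; exact: (phi_inj hk hG hO hg hh e).
- by move=> tau ht; exact: (phi_surj hk hG hO ht).
move=> g h hg hh; split; last exact: adj2.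
case=> i [l [hi [hl [e|e]]]].
  exact: (adj1 hk hG hO hg hh hi hl e).
have [ne [sigma [hf [s1 s2]]]] := adj1 hk hG hO hh hg hi hl e.
split; first by move=> x; apply: ne; symmetry.
by exists sigma.
Qed.


Unset Implicit Arguments. Set Strict Implicit.

Theorem corollary5 (d k : nat) (hd : 1 <= d) (hk : 1 <= k)
  (Gam : Vtx -> 'I_d.+1) (Om : seq Vtx -> nat -> Cell -> Cell) :
  is_coloring d k Gam -> is_k_ordering d k Om ->
  let phi := fun g => act d Gam Om g root_cell in
  [/\ (forall g, is_reduced d k g -> is_cell d k (phi g)),
      (forall g h, is_reduced d k g -> is_reduced d k h -> phi g = phi h -> g = h),
      (forall tau, is_cell d k tau -> exists2 g, is_reduced d k g & phi g = tau)
    & (forall g h, is_reduced d k g -> is_reduced d k h ->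
         cay_adj d k g h <-> line_adj d k (phi g) (phi h))].
Proof. exact: (@corollary5_aux d k hd hk Gam Om). Qed.
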